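(* For all $\mathfrak a\in I_K$ and all $b\in\mathbb N$ we have $R_b(\mathfrak a^2,1)\neq\emptyset$.
   Context: Let $K$ be a real quadratic number field with odd discriminant $D$, ring of integers $\mathcal O_K$, conjugation $x\mapsto x'$, norm $N(x)=xx'$. Let $I_K$ be the group of nonzero fractional ideals and $N(\mathfrak a)\in\mathbb Q_{>0}$ the absolute norm of $\mathfrak a\in I_K$ (multiplicative, with $N(x\mathcal O_K)=|N(x)|$). For $b\in\mathbb N$, $\mathfrak a\in I_K$, $m\in\mathbb Z$ let $R_b(\mathfrak a,m)=\{\lambda\in\mathfrak a/b\mathfrak a : N(\lambda)/N(\mathfrak a)\equiv m\pmod b\}$ (well defined since $N(\lambda)/N(\mathfrak a)\in\mathbb Z$ for $\lambda\in\mathfrak a$ and its class mod $b$ depends only on $\lambda$ mod $b\mathfrak a$). *)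

(* Defs.v *)
(* Concrete model of the real quadratic field K of odd
   discriminant D (D > 1, D = 1 mod 4, D squarefree):
   an element x : K is a pair of rationals (x.1, x.2) standing for
   x.1 + x.2 * w, where w = (1 + sqrt D)/2, so O_K = Z + Z w and
   w^2 = w + (D-1)/4. *)
From mathcomp Require Import all_boot all_order all_algebra.
From Stdlib Require Import ClassicalEpsilon.
Set Implicit Arguments. Unset Strict Implicit. Unset Printing Implicit Defensive.
Import Order.TTheory GRing.Theory Num.Theory.
Local Open Scope ring_scope.

Definition squarefree_int (D : int) : Prop :=
  forall p : nat, prime p -> ~~ ((p * p)%:Z %| D)%Z.

Definition K : Type := (rat * rat)%type.

Definition wconst (D : int) : rat := (D%:~R - 1) / 4.

Definition Kzero : K := (0, 0).
Definition Kadd (x y : K) : K := (x.1 + y.1, x.2 + y.2).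
Definition Kscale (n : int) (x : K) : K := (n%:~R * x.1, n%:~R * x.2).
Definition Kmul (D : int) (x y : K) : K :=
  (x.1 * y.1 + x.2 * y.2 * wconst D, x.1 * y.2 + x.2 * y.1 + x.2 * y.2).
(* Galois conjugation: w' = 1 - w *)
Definition Kconj (x : K) : K := (x.1 + x.2, - x.2).
(* N(x) = x x' *)
Definition Knorm (D : int) (x : K) : rat :=
  x.1 ^+ 2 + x.1 * x.2 - wconst D * x.2 ^+ 2.

Definition isint (q : rat) : bool := denq q == 1.
Definition in_OK (x : K) : bool := isint x.1 && isint x.2.

Definition frac_ideal (D : int) (A : K -> Prop) : Prop :=
  [/\ A Kzero,
      (forall x y, A x -> A y -> A (Kadd x y)),
      (forall r x, in_OK r -> A x -> A (Kmul D r x)),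
      (exists x, A x /\ x <> Kzero) &
      (exists d : int, d != 0 /\ forall x, A x -> in_OK (Kscale d x))].

Definition ideal_mul (D : int) (A B : K -> Prop) : K -> Prop :=
  fun x => exists s : seq (K * K),
    (forall p, p \in s -> A p.1 /\ B p.2) /\
    x = foldr (fun p acc => Kadd (Kmul D p.1 p.2) acc) Kzero s.

Definition Kdet (v1 v2 : K) : rat := v1.1 * v2.2 - v1.2 * v2.1.

Definition Zbasis (A : K -> Prop) (v1 v2 : K) : Prop :=
  Kdet v1 v2 != 0 /\
  forall x, A x <-> exists m n : int, x = Kadd (Kscale m v1) (Kscale n v2).

(* absolute norm N(A) = [O_K : A] (generalized index) = |det| of a Z-basis *)
Definition ideal_norm (A : K -> Prop) : rat :=
  epsilon (inhabits 0)
    (fun q => exists v1 v2, Zbasis A v1 v2 /\ q = `|Kdet v1 v2|).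

(* Main.v *)
Require Import Defs.
From mathcomp Require Import all_boot all_order all_algebra.
From mathcomp Require Import ring lra zify.
From Stdlib Require Import ClassicalEpsilon Classical.
Import Order.TTheory GRing.Theory Num.Theory.
Local Open Scope ring_scope.
Set Implicit Arguments. Unset Strict Implicit.

Lemma isintP (q : rat) : isint q <-> exists n : int, q = n%:~R.
Proof. rewrite /isint -Qint_def; split; [by move/intrP|by move=> H; apply/intrP]. Qed.

Lemma isint_int (n : int) : isint n%:~R.
Proof. by apply/isintP; exists n. Qed.

Lemma Kext (x y : K) : x.1 = y.1 -> x.2 = y.2 -> x = y.
Proof. by case: x => ? ?; case: y => ? ? /= -> ->. Qed.

Section Ideal.
Variables (D : int) (A : K -> Prop) (hA : frac_ideal D A).

Lemma A0 : A Kzero. Proof. by case: hA. Qed.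
Lemma Aadd x y : A x -> A y -> A (Kadd x y). Proof. by case: hA => _ H _ _ _; apply: H. Qed.
Lemma Amul r x : in_OK r -> A x -> A (Kmul D r x). Proof. by case: hA => _ _ H _ _; apply: H. Qed.
Lemma Ascale (n : int) x : A x -> A (Kscale n x).
Proof.
move=> Ax; have -> : Kscale n x = Kmul D (n%:~R, 0) x.
  by apply: Kext; rewrite /= ; ring.
by apply: Amul => //; rewrite /in_OK /= isint_int.
Qed.
Lemma Aw x : A x -> A (Kmul D (0,1) x).
Proof. by apply: Amul. Qed.
End Ideal.
Definition pb (P : nat -> Prop) (n : nat) : bool :=
  if excluded_middle_informative (P n) then true else false.
Lemma pbP P n : pb P n <-> P n.
Proof. by rewrite /pb; case: excluded_middle_informative. Qed.

Lemma subgroup_gen (H : rat -> Prop) (d : int) :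
  d != 0 -> H 0 -> (forall x y, H x -> H y -> H (x - y)) ->
  (forall x, H x -> isint (d%:~R * x)) -> (exists x, H x /\ x != 0) ->
  exists c, 0 < c /\ H c /\ forall x, H x <-> exists n : int, x = n%:~R * c.
Proof.
move=> d0 H0 Hsub Hd [x0 [Hx0 x00]].
have Hneg x : H x -> H (- x) by move=> Hx; rewrite -sub0r; apply: Hsub.
have Hadd x y : H x -> H y -> H (x + y).
  by move=> Hx Hy; rewrite -(opprK y); apply: Hsub => //; apply: Hneg.
have Hnat c (k : nat) : H c -> H (k%:R * c).
  move=> Hc; elim: k => [|k IH]; first by rewrite mul0r.
  by rewrite -addn1 natrD mulrDl mul1r; apply: Hadd.
have Hint c (n : int) : H c -> H (n%:~R * c).
  move=> Hc; case: n => k; first by apply: (Hnat c k).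
  by rewrite NegzE mulrNz mulNr; apply: Hneg; apply: (Hnat c k.+1).
pose e : int := d * d.
have e0 : 0 < e by rewrite /e -expr2 exprn_even_gt0 //.
have He x : H x -> exists n : int, e%:~R * x = n%:~R.
  move=> /Hd /isintP [n hn]; exists (d * n).
  by rewrite /e !rmorphM /= -mulrA hn.
pose P (n : nat) := (0 < n)%N /\ H (n%:R / e%:~R).
have eQ0 : (e%:~R : rat) != 0 by rewrite intr_eq0 gt_eqF.
have eQ : (0 : rat) < e%:~R by rewrite ltr0z.
have exP : exists n, pb P n.
  have [k hk] := He _ Hx0.
  exists `|k|%N; apply/pbP; split.
    rewrite absz_gt0; apply: contra x00 => /eqP k0.
    by move: hk; rewrite k0 => /eqP; rewrite mulf_eq0 (negbTE eQ0).
  have -> : (`|k|%N%:R / e%:~R : rat) = `|x0|.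
    rewrite -[_%:R]/((Posz `|k|)%:~R) -[Posz `|k|]/(`|k|%R) intr_norm -hk.
    by rewrite normrM gtr0_norm // mulrAC mulfV // mul1r.
  by case: (ger0P x0) => _; [|apply: Hneg].
have [n0 /pbP [n0p Hn0] n0min] := find_ex_minn exP.
exists (n0%:R / e%:~R); split; first by rewrite divr_gt0 // ltr0n.
split=> // x; split; last by move=> [n ->]; apply: Hint.
move=> Hx; have [X hX] := He _ Hx.
have n0z : (0 < Posz n0)%R by rewrite ltz_nat.
have [q [r [hr0 [hrn eqX]]]] : exists (q r : int), (0 <= r)%R /\ (r < Posz n0)%R /\ X = q * (Posz n0) + r.
  exists (X %/ n0)%Z, (X %% n0)%Z; split; first by rewrite modz_ge0 // gt_eqF.
  by split; [rewrite ltz_pmod | rewrite -divz_eq].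
have Hy : H (x - q%:~R * (n0%:R / e%:~R)) by apply: Hsub => //; apply: Hint.
have hy : e%:~R * (x - q%:~R * (n0%:R / e%:~R)) = r%:~R.
  rewrite mulrBr hX eqX rmorphD rmorphM /=.
  have -> : (Posz n0)%:~R = (n0%:R : rat) by [].
  by field.
exists q.
case: (r =P 0) => [r0|/eqP rn0].
  apply/eqP; rewrite -subr_eq0 -(mulrI_eq0 _ (mulfI eQ0)) hy r0 //.
exfalso.
have [rn er] : exists rn : nat, r = Posz rn by case: r hr0 {hrn eqX hy} rn0 => // k _ _; exists k.
subst r.
have : pb P rn.
  apply/pbP; split; first by rewrite lt0n; apply: contra rn0 => /eqP ->.
  suff -> : (rn%:R / e%:~R : rat) = x - q%:~R * (n0%:R / e%:~R) by [].
  apply: (mulfI eQ0); rewrite hy mulrCA mulfV // mulr1 //.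
move=> /n0min; move: hrn; rewrite ltz_nat => /leq_trans h /h.
by rewrite ltnn.
Qed.
Lemma wconstE (D : int) : (D %% 4)%Z = 1 -> exists M : int, D = 4 * M + 1 /\ wconst D = M%:~R.
Proof.
move=> h; exists (D %/ 4)%Z.
have e : D = 4 * (D %/ 4)%Z + 1 by rewrite {1}(divz_eq D 4) h mulrC.
split=> //; rewrite /wconst {1}e rmorphD rmorphM /=.
have -> : (4%:~R : rat) = 4 by [].
by field.
Qed.

Lemma no_sq_int (D : int) : 1 < D -> squarefree_int D -> forall r : rat, r ^+ 2 != D%:~R.
Proof.
move=> D1 hsq r; apply/eqP => hr.
have hz : numq r ^+ 2 = D * denq r ^+ 2.
  apply: (@intr_inj rat); rewrite rmorphXn rmorphM rmorphXn /= -hr.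
  have := denq_gt0 r; rewrite -(ltr0z rat) => dpos.
  have := divq_num_den r.
  move: (numq r) (denq r) dpos => n dd dpos <-.
  by field; rewrite gt_eqF.
have hn : (`|numq r| ^ 2 = `|D| * `|denq r| ^ 2)%N.
  by rewrite -!abszX hz abszM.
have cop := coprime_num_den r.
have hq1 : `|denq r|%N = 1%N.
  have dv : (`|denq r| ^ 2 %| `|numq r| ^ 2)%N by rewrite hn dvdn_mull.
  have cop2 : coprime (`|denq r| ^ 2) (`|numq r| ^ 2) by rewrite coprime_pexpl // coprime_pexpr // coprime_sym.
  move: (gcdn_idPl dv); rewrite (eqP cop2) => /esym /eqP.
  by rewrite -mulnn muln_eq1 => /andP [/eqP].
rewrite hq1 exp1n muln1 in hn.
have D1' : (1 < `|D|)%N by case: D D1 {hsq hr hz hn} => // n; rewrite ltz_nat.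
have N1 : (1 < `|numq r|)%N.
  rewrite ltnNge; apply/negP => h; move: D1'; rewrite -hn.
  by case: (`|numq r|%N) h => [|[|]].
have pp := pdiv_prime N1.
have := hsq _ pp; rewrite dvdzE /=.
by rewrite -hn -mulnn dvdn_mul // pdiv_dvd.
Qed.

Lemma nonsq (D M : int) : 1 < D -> squarefree_int D -> D = 4 * M + 1 ->
  forall x1 x2 : rat, x1 ^+ 2 + x1 * x2 - M%:~R * x2 ^+ 2 = 0 -> x1 = 0 /\ x2 = 0.
Proof.
move=> D1 hsq eD x1 x2 h.
case: (x2 =P 0) => [x20|/eqP x20].
  by move: h; rewrite x20 mulr0 expr0n /= mulr0 !subr0 ?addr0 => /eqP; rewrite expf_eq0 /= => /eqP.
exfalso; apply/negP: (@no_sq_int D D1 hsq ((2 * x1 + x2) / x2)); apply/negPn.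
rewrite eD rmorphD rmorphM /=.
have -> : (4%:~R : rat) = 4 by [].
have hM : M%:~R = (x1 ^+ 2 + x1 * x2) / x2 ^+ 2.
  apply: (mulIf (expf_neq0 2 x20)); rewrite mulfVK ?expf_neq0 //.
  by rewrite -[RHS]subr0 -h; ring.
by rewrite hM; apply/eqP; field.
Qed.

Section Struct.
Variables (D M : int) (A : K -> Prop) (hA : frac_ideal D A).
Hypothesis hM : wconst D = M%:~R.
Hypothesis hns : forall x1 x2 : rat, x1 ^+ 2 + x1 * x2 - M%:~R * x2 ^+ 2 = 0 -> x1 = 0 /\ x2 = 0.

Lemma Asub x y : A x -> A y -> A (x.1 - y.1, x.2 - y.2).
Proof.
move=> Ax Ay; have := Aadd hA Ax (Ascale hA (-1) Ay).
by congr A; apply: Kext => /=; ring.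
Qed.

Lemma Kmul_w (x : K) : Kmul D (0,1) x = (x.2 * M%:~R, x.1 + x.2).
Proof. by apply: Kext; rewrite /Kmul /= ?hM; ring. Qed.

Lemma structure : exists (s : rat) (a t e : int), 0 < s /\ 0 < a /\ t * t + t - M = a * e /\
  forall x, A x <-> exists I J : int, x = Kadd (Kscale I (s * a%:~R, 0)) (Kscale J (s * t%:~R, s)).
Proof.
have [A0' _ _ [al [Aal al0]] [d [d0 Hd]]] := hA.
have Hd1 x : A x -> isint (d%:~R * x.1) by move/Hd => /andP [].
have Hd2 x : A x -> isint (d%:~R * x.2) by move/Hd => /andP [].
pose H1 := fun r => A (r, 0).
pose H2 := fun r => exists x, A x /\ x.2 = r.
have [c0 [c0p [Hc0 H1E]]] : exists c, 0 < c /\ H1 c /\ forall x, H1 x <-> exists n : int, x = n%:~R * c.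
  apply: (subgroup_gen d0) => //.
  - by move=> x y Hx Hy; have := Asub Hx Hy; rewrite /H1 /= subr0.
  - by move=> x /Hd1.
  case: al Aal al0 => p1 p2 Aal al0.
  have /isintP [n1 hn1] := Hd1 _ Aal; have /isintP [n2 hn2] := Hd2 _ Aal.
  have Ar : A (Kmul D ((n1 + n2)%:~R, (- n2)%:~R) (p1, p2)).
    by apply: Amul => //; rewrite /in_OK /= !isint_int.
  exists (d%:~R * (p1 ^+ 2 + p1 * p2 - M%:~R * p2 ^+ 2)); split.
    move: Ar; rewrite /H1; congr A; apply: Kext; rewrite /Kmul /= ?hM rmorphD rmorphN /= -hn1 -hn2 /=; ring.
  rewrite mulf_eq0 negb_or intr_eq0 d0 /=; apply/eqP => /hns [h1 h2].
  by apply: al0; rewrite h1 h2.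
have [s [sp [Hs H2E]]] : exists c, 0 < c /\ H2 c /\ forall x, H2 x <-> exists n : int, x = n%:~R * c.
  apply: (subgroup_gen d0).
  - by exists Kzero.
  - move=> x y [u [Au <-]] [v [Av <-]]; exists (u.1 - v.1, u.2 - v.2); split => //.
    exact: Asub.
  - by move=> x [u [Au <-]]; apply: Hd2.
  case: al Aal al0 => p1 p2 Aal al0.
  case: (p2 =P 0) => [p20|/eqP p20]; last by exists p2; split => //; exists (p1, p2).
  exists p1; split.
    by exists (Kmul D (0,1) (p1, p2)); split; [apply: Aw | rewrite Kmul_w /= p20 addr0].
  by apply/eqP => p10; apply: al0; rewrite p10 p20.
have [g [Ag g2]] := Hs.
have [a ha] : exists a : int, c0 = a%:~R * s.
  apply/H2E; exists (Kmul D (0,1) (c0, 0)); split; first exact: Aw.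
  by rewrite Kmul_w /= ?add0r ?addr0.
have ap : 0 < a by rewrite -(ltr0z rat) -(pmulr_lgt0 _ sp) -ha.
have [k hk] : exists k : int, g.1 + g.2 = k%:~R * s.
  by apply/H2E; exists (Kmul D (0,1) g); split; [apply: Aw | rewrite Kmul_w].
have [j hj] : exists j : int, s * M%:~R - k%:~R * g.1 = j%:~R * c0.
  apply/H1E; have := Asub (Aw hA Ag) (Ascale hA k Ag).
  rewrite /H1; congr A; apply: Kext; rewrite /= ?hM ?g2; first ring.
  have -> : k%:~R * s = g.1 + s by rewrite -hk g2.
  ring.
have hg1 : g.1 = s * (k - 1)%:~R by apply: (addIr g.2); rewrite hk g2 rmorphB /=; ring.
have sn0 : s != 0 by rewrite gt_eqF.
have e1 : M - k * (k - 1) = j * a.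
  apply: (@intr_inj rat); apply: (mulIf sn0).
  rewrite rmorphB !rmorphM rmorphB /=.
  rewrite -[RHS]mulrA -ha -hj hg1 rmorphB /=; ring.
exists s, a, (k - 1), (- j); split => //; split => //; split.
  have -> : M = k * (k - 1) + j * a by rewrite -e1; ring.
  ring.
move=> x; split.
  move=> Ax; have [J hJ] : exists J : int, x.2 = J%:~R * s by apply/H2E; exists x.
  have [I hI] : exists I : int, x.1 - J%:~R * g.1 = I%:~R * c0.
    apply/H1E; have := Asub Ax (Ascale hA J Ag); rewrite /H1; congr A.
    by apply: Kext; rewrite //= hJ g2; ring.
  exists I, J; apply: Kext => /=.
    by rewrite -hg1 -[LHS](subrK (J%:~R * g.1)) hI ha; ring.
  by rewrite hJ; ring.
move=> [I [J ->]]; apply: (Aadd hA); apply: (Ascale hA).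
  by rewrite mulrC -ha.
by rewrite -hg1 -g2; case: g Ag {g2 hg1 hk hj} => ? ?.
Qed.
End Struct.

Section Ids.
Variables (D M a t h a' c' x0 y0 p0 q0 e : int) (s : rat).
Hypotheses (hM : wconst D = M%:~R) (hae : t * t + t - M = a * e) (ha : a = a' * h)
  (hc : 2 * t + 1 = c' * h) (hxy : x0 * a' + y0 * c' = 1) (hpq : p0 * h + q0 * e = 1)
  (a'0 : a' != 0) (h0 : h != 0).

Let al1 : K := (s * a%:~R, 0).
Let al2 : K := (s * t%:~R, s).
Definition G11 := Kmul D al1 al1.
Definition G12 := Kmul D al1 al2.
Definition G22 := Kmul D al2 al2.
Definition u2 := Kadd (Kscale x0 G12) (Kscale y0 G22).
Definition u1 := Kadd (Kscale p0 G11) (Kscale q0 (Kadd (Kscale c' G12) (Kscale (- a') G22))).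

Let hMr : (M%:~R : rat) = t%:~R ^+ 2 + t%:~R - a%:~R * e%:~R.
Proof. have := congr1 (fun z : int => (z%:~R : rat)) hae; rewrite /= !rmorphD rmorphN !rmorphM /=.
by move=> <-; ring. Qed.
Let har : (a%:~R : rat) = a'%:~R * h%:~R.
Proof. by rewrite ha rmorphM. Qed.
Let htr : (t%:~R : rat) = (c'%:~R * h%:~R - 1) / 2.
Proof. have := congr1 (fun z : int => (z%:~R : rat)) hc; rewrite /= rmorphD !rmorphM rmorph1 /= => <-.
have -> : (2%:~R : rat) = 2 by []. by field. Qed.
Let h0r : (h%:~R : rat) != 0. Proof. by rewrite intr_eq0. Qed.
Let a0r : (a'%:~R : rat) != 0. Proof. by rewrite intr_eq0. Qed.
Let hxr : (x0%:~R : rat) = (1 - y0%:~R * c'%:~R) / a'%:~R.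
Proof. have := congr1 (fun z : int => (z%:~R : rat)) hxy; rewrite /= rmorphD !rmorphM rmorph1 /= => E.
apply: (mulIf a0r); rewrite divfK //; move: E.
set x := _ * _; set y := _ * _; move=> E; rewrite -E; ring. Qed.
Let hpr : (p0%:~R : rat) = (1 - q0%:~R * e%:~R) / h%:~R.
Proof. have := congr1 (fun z : int => (z%:~R : rat)) hpq; rewrite /= rmorphD !rmorphM rmorph1 /= => E.
apply: (mulIf h0r); rewrite divfK //; move: E.
set x := _ * _; set y := _ * _; move=> E; rewrite -E; ring. Qed.

Ltac solve_id := apply: Kext; rewrite /u1 /u2 /G11 /G12 /G22 /Kmul /Kscale /Kadd /= ?hM ?rmorphN ?rmorphM /=;
  rewrite ?hMr ?hxr ?hpr ?har ?htr; field; rewrite ?h0r ?a0r //.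

Lemma id11 : G11 = Kscale h u1.
Proof. solve_id. Qed.
Lemma id12 : G12 = Kadd (Kscale (y0 * e) u1) (Kscale a' u2).
Proof. solve_id. Qed.
Lemma id22 : G22 = Kadd (Kscale (- (x0 * e)) u1) (Kscale c' u2).
Proof. solve_id. Qed.
Lemma det_u : Kdet u1 u2 = s ^+ 4 * a%:~R ^+ 2.
Proof. rewrite /Kdet; rewrite /u1 /u2 /G11 /G12 /G22 /Kmul /Kscale /Kadd /= ?hM ?rmorphN ?rmorphM /=;
  rewrite ?hMr ?hxr ?hpr ?har ?htr; field; rewrite ?h0r ?a0r //. Qed.
End Ids.

Definition Sp (u v : K) (x : K) := exists I J : int, x = Kadd (Kscale I u) (Kscale J v).

Lemma Sp_add u v x y : Sp u v x -> Sp u v y -> Sp u v (Kadd x y).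
Proof.
move=> [I [J ->]] [I' [J' ->]]; exists (I + I'), (J + J').
by apply: Kext; rewrite /= !rmorphD /=; ring.
Qed.
Lemma Sp_scale u v n x : Sp u v x -> Sp u v (Kscale n x).
Proof.
move=> [I [J ->]]; exists (n * I), (n * J).
by apply: Kext; rewrite /= !rmorphM /=; ring.
Qed.
Lemma Sp_lin u v I J : Sp u v (Kadd (Kscale I u) (Kscale J v)).
Proof. by exists I, J. Qed.
Lemma Sp_zero u v : Sp u v Kzero.
Proof. by exists 0, 0; apply: Kext; rewrite /=; ring. Qed.

Definition ksum (D : int) (l : seq (K * K)) : K :=
  foldr (fun p acc => Kadd (Kmul D p.1 p.2) acc) Kzero l.

Lemma ksum_cat D l1 l2 : ksum D (l1 ++ l2) = Kadd (ksum D l1) (ksum D l2).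
Proof.
elim: l1 => [|p l IH] /=; first by apply: Kext; rewrite /= add0r.
rewrite /ksum /= -/(ksum D _) IH; apply: Kext; rewrite /=; ring.
Qed.

Section IM.
Variables (D : int) (A : K -> Prop) (hA : frac_ideal D A).
Lemma Pprod x y : A x -> A y -> ideal_mul D A A (Kmul D x y).
Proof.
move=> Ax Ay; exists [:: (x, y)]; split.
  by move=> p; rewrite inE => /eqP ->.
by apply: Kext; rewrite /= addr0.
Qed.
Lemma Padd x y : ideal_mul D A A x -> ideal_mul D A A y -> ideal_mul D A A (Kadd x y).
Proof.
move=> [l1 [H1 ->]] [l2 [H2 ->]]; exists (l1 ++ l2); split.
  by move=> p; rewrite mem_cat => /orP [/H1|/H2].
exact: (esym (ksum_cat D l1 l2)).
Qed.
Lemma Pscale n x : ideal_mul D A A x -> ideal_mul D A A (Kscale n x).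
Proof.
move=> [l [Hl ->]]; exists [seq (Kscale n p.1, p.2) | p <- l]; split.
  move=> p /mapP [q qin ->] /=; have [h1 h2] := Hl q qin; split => //.
  exact: (Ascale hA).
elim: l {Hl} => [|p l IH] /=; first by apply: Kext; rewrite /= mulr0.
rewrite -IH; apply: Kext; rewrite /Kmul /= ; ring.
Qed.
Lemma Pspan u v : (forall x y, A x -> A y -> Sp u v (Kmul D x y)) ->
  forall x, ideal_mul D A A x -> Sp u v x.
Proof.
move=> H x [l [Hl ->]]; elim: l Hl => [|p l IH] Hl /=; first exact: Sp_zero.
apply: Sp_add; first by have [] := Hl p (mem_head _ _); apply: H.
by apply: IH => q qin; apply: Hl; rewrite inE qin orbT.
Qed.
End IM.

Lemma Zbasis_in (P : K -> Prop) u v : Zbasis P u v -> P u /\ P v.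
Proof.
move=> [_ H]; split; apply/H; [exists 1, 0 | exists 0, 1]; apply: Kext; rewrite /=; ring.
Qed.

Lemma det_change u v (m11 m12 m21 m22 : int) x y :
  x = Kadd (Kscale m11 u) (Kscale m12 v) -> y = Kadd (Kscale m21 u) (Kscale m22 v) ->
  Kdet x y = (m11 * m22 - m12 * m21)%:~R * Kdet u v.
Proof. move=> -> ->; rewrite /Kdet /= rmorphB !rmorphM /=; ring. Qed.

Lemma Zbasis_det (P : K -> Prop) v1 v2 u1 u2 :
  Zbasis P v1 v2 -> Zbasis P u1 u2 -> `|Kdet v1 v2| = `|Kdet u1 u2|.
Proof.
move=> Bv Bu; have [Pv1 Pv2] := Zbasis_in Bv; have [Pu1 Pu2] := Zbasis_in Bu.
case: Bv => dv Hv; case: Bu => du Hu.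
have [m11 [m12 e1]] := (Hv u1).1 Pu1; have [m21 [m22 e2]] := (Hv u2).1 Pu2.
have [n11 [n12 f1]] := (Hu v1).1 Pv1; have [n21 [n22 f2]] := (Hu v2).1 Pv2.
have E1 := det_change e1 e2; have E2 := det_change f1 f2.
set dM := (m11 * m22 - m12 * m21) in E1; set dN := (n11 * n22 - n12 * n21) in E2.
have h1 : dM * dN = 1.
  apply: (@intr_inj rat); rewrite rmorphM rmorph1 /=.
  apply: (mulIf dv); rewrite mul1r [in RHS]E2 E1; ring.
have hM : (`|dM| = 1)%N.
  have : (`|dM| * `|dN|)%N = 1%N by rewrite -abszM h1.
  by move/eqP; rewrite muln_eq1 => /andP [/eqP -> _].
rewrite E1 normrM -intr_norm.
have -> : `|dM|%R = 1 by rewrite -abszE hM.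
by rewrite mul1r.
Qed.

Lemma ideal_norm_eq (P : K -> Prop) u v : Zbasis P u v -> ideal_norm P = `|Kdet u v|.
Proof.
move=> B; rewrite /ideal_norm.
have ex : exists q, exists v1 v2, Zbasis P v1 v2 /\ q = `|Kdet v1 v2| by exists `|Kdet u v|, u, v.
have [v1 [v2 [B' ->]]] := epsilon_spec (inhabits 0) _ ex.
exact: Zbasis_det B' B.
Qed.
Lemma Euclidz (p : nat) (m n : int) : prime p -> (p%:Z %| m * n)%Z = (p%:Z %| m)%Z || (p%:Z %| n)%Z.
Proof. by move=> pp; rewrite !dvdzE abszM Euclid_dvdM. Qed.

Lemma dvd_prod_primes (p : nat) (r : seq nat) (P : pred nat) : prime p -> all prime r ->
  (p %| \prod_(i <- r | P i) i)%N = (p \in r) && P p.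
Proof.
move=> pp; elim: r => [|i r IH] /=.
  move=> _; rewrite big_nil dvdn1 ?in_nil /=; by apply: negbTE; apply: contraL pp => /eqP ->.
move=> /andP [hpi ar]; rewrite big_cons inE; case Pi: (P i).
  rewrite Euclid_dvdM // IH // dvdn_prime2 //.
  by case: (p =P i) => [->|] /=; rewrite ?Pi ?andbT.
rewrite IH //; case: (p =P i) => [->|] /=; by rewrite ?Pi ?andbF.
Qed.

Lemma prim_rep (a c e : int) (b : nat) : (0 < b)%N ->
  (forall p, prime p -> ~~ [&& (p%:Z %| a)%Z, (p%:Z %| c)%Z & (p%:Z %| e)%Z]) ->
  exists X Y : int, coprimez (a * X ^+ 2 + c * X * Y + e * Y ^+ 2) b.
Proof.
move=> b0 prim.
pose X := (\prod_(p <- primes b | (p %| `|a|)%N && ~~ (p %| `|e|)%N) p)%N.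
pose Y := (\prod_(p <- primes b | ~~ (p %| `|a|)%N) p)%N.
exists X, Y; apply/negPn/negP => ncop.
set f := _ + _ in ncop.
have g1 : (1 < gcdn `|f| b)%N.
  rewrite ltn_neqAle eq_sym; move: ncop; rewrite coprimezE /coprime => -> /=.
  by rewrite gcdn_gt0 b0 orbT.
have pp := pdiv_prime g1.
set p := pdiv _ in pp.
have pf : (p%:Z %| f)%Z by rewrite dvdzE /=; apply: dvdn_trans (pdiv_dvd _) (dvdn_gcdl _ _).
have pb : (p %| b)%N by apply: dvdn_trans (pdiv_dvd _) (dvdn_gcdr _ _).
have pin : p \in primes b by rewrite mem_primes pp b0 pb.
have allp : all prime (primes b) by apply/allP => q; rewrite mem_primes => /andP [].
have hX : (p%:Z %| X%:Z)%Z = (p %| `|a|)%N && ~~ (p %| `|e|)%N.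
  by rewrite dvdzE /= dvd_prod_primes // pin.
have hY : (p%:Z %| Y%:Z)%Z = ~~ (p %| `|a|)%N.
  by rewrite dvdzE /= dvd_prod_primes // pin.
have da : (p%:Z %| a)%Z = (p %| `|a|)%N by rewrite dvdzE.
have de : (p%:Z %| e)%Z = (p %| `|e|)%N by rewrite dvdzE.
have prim_p := prim p pp.
have key T R : f - T = R -> (p%:Z %| T)%Z -> (p%:Z %| R)%Z.
  by move=> <- hT; apply: rpredB.
case pa: (p %| `|a|)%N; case pe: (p %| `|e|)%N; rewrite ?pa ?pe /= in hX hY.
- have := key (a * X%:Z ^+ 2 + e * Y%:Z ^+ 2) (c * (X%:Z * Y%:Z)).
  rewrite /f; have -> : forall u v w : int, u + v + w - (u + w) = v by move=> u v w; ring.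
  move/(_ (esym (mulrA _ _ _))).
  have hT : (p%:Z %| a * X%:Z ^+ 2 + e * Y%:Z ^+ 2)%Z.
    by apply: rpredD; apply: dvdz_mulr; rewrite ?da ?de ?pa ?pe.
  move/(_ hT).
  rewrite !Euclidz // hX hY !orbF => pc.
  by move: prim_p; rewrite pc da de pa pe.
- have := key (X%:Z * (a * X%:Z + c * Y%:Z)) (e * (Y%:Z * Y%:Z)).
  have hh : f - X%:Z * (a * X%:Z + c * Y%:Z) = e * (Y%:Z * Y%:Z) by rewrite /f; ring.
  by move/(_ hh (dvdz_mulr _ hX)); rewrite !Euclidz // de pe hY.
- have := key (Y%:Z * (c * X%:Z + e * Y%:Z)) (a * (X%:Z * X%:Z)).
  have hh : f - Y%:Z * (c * X%:Z + e * Y%:Z) = a * (X%:Z * X%:Z) by rewrite /f; ring.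
  by move/(_ hh (dvdz_mulr _ hY)); rewrite !Euclidz // da pa hX.
- have := key (Y%:Z * (c * X%:Z + e * Y%:Z)) (a * (X%:Z * X%:Z)).
  have hh : f - Y%:Z * (c * X%:Z + e * Y%:Z) = a * (X%:Z * X%:Z) by rewrite /f; ring.
  by move/(_ hh (dvdz_mulr _ hY)); rewrite !Euclidz // da pa hX.
Qed.

Lemma prim_D (D M a t e : int) : squarefree_int D -> D = 4 * M + 1 -> t * t + t - M = a * e ->
  forall p, prime p -> ~~ [&& (p%:Z %| a)%Z, (p%:Z %| 2 * t + 1)%Z & (p%:Z %| e)%Z].
Proof.
move=> hsq eD hae p pp; apply/negP => /and3P [pa pc pe].
have eD' : D = (2 * t + 1) * (2 * t + 1) - 4 * (a * e) by rewrite -hae eD; ring.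
apply: (negP (hsq p pp)); rewrite eD'; apply: rpredB.
  by rewrite PoszM; apply: dvdz_mul.
by apply: dvdz_mull; rewrite PoszM; apply: dvdz_mul.
Qed.

Unset Implicit Arguments.

Theorem lemma3p4 (D : int) (hD1 : 1 < D) (hD4 : (D %% 4)%Z = 1)
    (hsqf : squarefree_int D)
    (A : K -> Prop) (hA : frac_ideal D A) (b : nat) (hb : (0 < b)%N) :
  exists lam : K, ideal_mul D A A lam /\
    exists z : int,
      Knorm D lam / ideal_norm (ideal_mul D A A) = z%:~R /\
      (z = 1 %[mod b%:Z])%Z.
Proof.
have [M [eD hM]] := wconstE hD4.
have hns := @nonsq D M hD1 hsqf eD.
have [s [a [t [e [sp [ap [hae hAE]]]]]]] := structure hA hM hns.
have prim := prim_D hsqf eD hae.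
pose h : int := gcdz a (2 * t + 1).
have [x0 [y0 hxy0]] := Bezoutz a (2 * t + 1).
have ha : a = (a %/ h)%Z * h by rewrite divzK // dvdz_gcdl.
have hc : 2 * t + 1 = ((2 * t + 1) %/ h)%Z * h by rewrite divzK // dvdz_gcdr.
set a' := (a %/ h)%Z in ha; set c' := ((2 * t + 1) %/ h)%Z in hc.
have h0 : h != 0 by apply: contraTneq ap => hz; rewrite ha hz mulr0.
have a'0 : a' != 0 by apply: contraTneq ap => hz; rewrite ha hz mul0r.
have hxy : x0 * a' + y0 * c' = 1.
  apply: (mulIf h0); rewrite mul1r mulrDl -!mulrA -ha -hc; exact: hxy0.
have cophe : coprimez h e.
  apply/negPn/negP => nc.
  have g0 : (0 < gcdn `|h| `|e|)%N by rewrite gcdn_gt0 absz_gt0 h0.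
  have g1 : (1 < gcdn `|h| `|e|)%N by rewrite ltn_neqAle eq_sym; move: nc; rewrite coprimezE /coprime => -> /=.
  have pp := pdiv_prime g1.
  have pg := pdiv_dvd (gcdn `|h| `|e|).
  have ph : ((pdiv (gcdn `|h| `|e|))%:Z %| h)%Z by rewrite dvdzE; apply: dvdn_trans pg (dvdn_gcdl _ _).
  have pe : ((pdiv (gcdn `|h| `|e|))%:Z %| e)%Z by rewrite dvdzE; apply: dvdn_trans pg (dvdn_gcdr _ _).
  move: (prim _ pp); rewrite pe andbT.
  by rewrite (dvdz_trans ph (dvdz_gcdl _ _)) (dvdz_trans ph (dvdz_gcdr _ _)).
have [p0 [q0 hpq0]] := Bezoutz h e.
have hpq : p0 * h + q0 * e = 1 by rewrite hpq0; apply/eqP.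
pose U1 := u1 D a t a' c' p0 q0 s.
pose U2 := u2 D a t x0 y0 s.
have i11 := id11 s hM hae ha hc hpq h0.
have i12 := id12 s hM hae ha hc hxy hpq a'0 h0.
have i22 := id22 s hM hae ha hc hxy hpq a'0 h0.
have dU := det_u s hM hae ha hc hxy hpq a'0 h0.
have Aal1 : A (s * a%:~R, 0).
  by apply/hAE; exists 1, 0; apply: Kext; rewrite /=; ring.
have Aal2 : A (s * t%:~R, s).
  by apply/hAE; exists 0, 1; apply: Kext; rewrite /=; ring.
have sn0 : s != 0 by rewrite gt_eqF.
have an0 : (a%:~R : rat) != 0 by rewrite intr_eq0 gt_eqF.
have ZB : Zbasis (ideal_mul D A A) U1 U2.
  split; first by rewrite /U1 /U2 dU mulf_neq0 // expf_neq0.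
  move=> x; split.
    apply: Pspan => y z /hAE [I [J ->]] /hAE [I' [J' ->]].
    have -> : Kmul D (Kadd (Kscale I (s * a%:~R, 0)) (Kscale J (s * t%:~R, s)))
                     (Kadd (Kscale I' (s * a%:~R, 0)) (Kscale J' (s * t%:~R, s))) =
      Kadd (Kscale (I * I') (G11 D a s))
        (Kadd (Kscale (I * J' + J * I') (G12 D a t s)) (Kscale (J * J') (G22 D t s))).
      by apply: Kext; rewrite /G11 /G12 /G22 /Kmul /= ?rmorphD ?rmorphM /=; ring.
    apply: Sp_add; last apply: Sp_add; apply: Sp_scale.
    - by rewrite i11; exists h, 0; apply: Kext; rewrite /=; ring.
    - by rewrite i12; apply: Sp_lin.
    - by rewrite i22; apply: Sp_lin.
  move=> [I [J ->]].
  have PG11 : ideal_mul D A A (G11 D a s) by apply: Pprod.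
  have PG12 : ideal_mul D A A (G12 D a t s) by apply: Pprod.
  have PG22 : ideal_mul D A A (G22 D t s) by apply: Pprod.
  apply: Padd; apply: (Pscale hA).
    rewrite /U1 /u1; apply: Padd; apply: (Pscale hA) => //.
    by apply: Padd; apply: (Pscale hA).
  by rewrite /U2 /u2; apply: Padd; apply: (Pscale hA).
have NP : ideal_norm (ideal_mul D A A) = s ^+ 4 * a%:~R ^+ 2.
  rewrite (ideal_norm_eq ZB) /U1 /U2 dU ger0_norm //.
  by rewrite mulr_ge0 // exprn_even_ge0.
have [X [Y cop]] := prim_rep hb prim.
set f := _ + _ in cop.
have [[u v] /= huv] := coprimezP _ _ cop.
pose al : K := Kadd (Kscale X (s * a%:~R, 0)) (Kscale Y (s * t%:~R, s)).
have Aal : A al by apply/hAE; exists X, Y.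
exists (Kscale u (Kmul D al al)); split.
  by apply: (Pscale hA); apply: Pprod.
exists ((u * f) ^+ 2); split.
  rewrite NP /Knorm /al /Kmul /Kscale /Kadd /= hM.
  have hMr : (M%:~R : rat) = t%:~R ^+ 2 + t%:~R - a%:~R * e%:~R.
    have := congr1 (fun z : int => (z%:~R : rat)) hae; rewrite /= !rmorphD rmorphN !rmorphM /=.
    by move=> <-; ring.
  rewrite hMr /f; rewrite ?(rmorphXn, rmorphM, rmorphD) /=.
  by field; rewrite sn0 an0.
apply/eqP; rewrite eqz_mod_dvd.
have -> : (u * f) ^+ 2 - 1 = (u * f + 1) * (u * f - 1) by ring.
apply: dvdz_mull.
have -> : u * f - 1 = - (v * b) by rewrite -huv; ring.
by rewrite rpredN dvdz_mull.
Qed.
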